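(* Let $m\ge1$ and let $u,v,p,q\in\mathbb{R}[x,y,z,w]$ be homogeneous of degree $m$ with $yp=zv$ and $yq=wv$. Define polynomials $U,V,P,Q$ by the quaternion identity $$U+\mathbf{i}V+\mathbf{j}P+\mathbf{k}Q=(x+\mathbf{i}y+\mathbf{j}z+\mathbf{k}w)(u+\mathbf{i}v+\mathbf{j}p+\mathbf{k}q),$$ and let $\Phi=(U,V,P,Q):\mathbb{R}^4\to\mathbb{R}^4$. Then at every point with $y\neq0$, $$|J(\Phi)|=\frac{(m+1)V^2\left[\,y(x^2+y^2+z^2+w^2)(v u_x-u v_x)+y^2u^2+v^2(y^2+z^2+w^2)\,\right]}{y^4}.$$
   Context: $\mathbb{H}$ is the real quaternion algebra with basis $1,\mathbf{i},\mathbf{j},\mathbf{k}$, $\mathbf{i}^2=\mathbf{j}^2=\mathbf{k}^2=-1$, $\mathbf{ij}=-\mathbf{ji}=\mathbf{k}$, $\mathbf{jk}=-\mathbf{kj}=\mathbf{i}$, $\mathbf{ki}=-\mathbf{ik}=\mathbf{j}$. For $F=(F_1,\dots,F_4):\mathbb{R}^4\to\mathbb{R}^4$ in variables $(x,y,z,w)$, $J(F)=[\partial F_i/\partial x_j]$ and $|J(F)|$ is its determinant; subscripts denote partial derivatives. *)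

(* Defs.v *)
From Stdlib Require Import Reals List.
Import ListNotations.
Open Scope R_scope.

(* A real polynomial in (x,y,z,w): a finite list of monomials
   (coefficient, (a,b,c,d)) standing for coef * x^a y^b z^c w^d. *)
Definition poly4 := list (R * (nat * nat * nat * nat)).

Definition mon_eval (t : R * (nat * nat * nat * nat)) (x y z w : R) : R :=
  match t with (c, (a, b, e, d)) => c * x ^ a * y ^ b * z ^ e * w ^ d end.

Definition peval (p : poly4) (x y z w : R) : R :=
  fold_right (fun t acc => mon_eval t x y z w + acc) 0 p.

Definition homog (m : nat) (p : poly4) : Prop :=
  Forall (fun t => match t with (_, (a, b, e, d)) => (a + b + e + d = m)%nat end) p.

(* Quaternion product of (a0 + i a1 + j a2 + k a3) and (b0 + i b1 + j b2 + k b3) *)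
Definition qmul (a b : R * R * R * R) : R * R * R * R :=
  match a, b with (a0, a1, a2, a3), (b0, b1, b2, b3) =>
    (a0*b0 - a1*b1 - a2*b2 - a3*b3,
     a0*b1 + a1*b0 + a2*b3 - a3*b2,
     a0*b2 - a1*b3 + a2*b0 + a3*b1,
     a0*b3 + a1*b2 - a2*b1 + a3*b0)
  end.

Definition R4fun := R -> R -> R -> R -> R.

(* pd j f x y z w l : the partial derivative of f w.r.t. its j-th variable
   (0:x, 1:y, 2:z, 3:w) at (x,y,z,w) exists and equals l *)
Definition pd (j : nat) (f : R4fun) (x y z w l : R) : Prop :=
  match j with
  | O => derivable_pt_lim (fun t => f t y z w) x l
  | 1%nat => derivable_pt_lim (fun t => f x t z w) y l
  | 2%nat => derivable_pt_lim (fun t => f x y t w) z l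
  | _ => derivable_pt_lim (fun t => f x y z t) w l
  end.

Definition det3 (a : nat -> nat -> R) (r0 r1 r2 c0 c1 c2 : nat) : R :=
  a r0 c0 * (a r1 c1 * a r2 c2 - a r1 c2 * a r2 c1)
  - a r0 c1 * (a r1 c0 * a r2 c2 - a r1 c2 * a r2 c0)
  + a r0 c2 * (a r1 c0 * a r2 c1 - a r1 c1 * a r2 c0).

Definition det4 (a : nat -> nat -> R) : R :=
  a 0%nat 0%nat * det3 a 1 2 3 1 2 3
  - a 0%nat 1%nat * det3 a 1 2 3 0 2 3
  + a 0%nat 2%nat * det3 a 1 2 3 0 1 3
  - a 0%nat 3%nat * det3 a 1 2 3 0 1 2.

Definition jac_det (F : nat -> R4fun) (x y z w d : R) : Prop :=
  exists a : nat -> nat -> R,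
    (forall i j, (i < 4)%nat -> (j < 4)%nat -> pd j (F i) x y z w (a i j)) /\
    d = det4 a.

Definition Phi (u v p q : poly4) (i : nat) : R4fun :=
  fun x y z w =>
    match qmul (x, y, z, w) (peval u x y z w, peval v x y z w,
                             peval p x y z w, peval q x y z w) with
    | (U, V, P, Q) =>
        match i with O => U | 1%nat => V | 2%nat => P | _ => Q end
    end.

(* Main.v *)
Require Import Defs.
From Stdlib Require Import Reals List.
From Stdlib Require Import Lra Lia FunctionalExtensionality.
Open Scope R_scope.

Lemma dl_eq f s l1 l2 : derivable_pt_lim f s l1 -> l1 = l2 -> derivable_pt_lim f s l2.
Proof. intros H ->; exact H. Qed.
Lemma dl_mul f g s l1 l2 : derivable_pt_lim f s l1 -> derivable_pt_lim g s l2 ->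
  derivable_pt_lim (fun t => f t * g t) s (l1 * g s + f s * l2).
Proof. intros; exact (derivable_pt_lim_mult f g s l1 l2 H H0). Qed.
Lemma dl_plus f g s l1 l2 : derivable_pt_lim f s l1 -> derivable_pt_lim g s l2 ->
  derivable_pt_lim (fun t => f t + g t) s (l1 + l2).
Proof. intros; exact (derivable_pt_lim_plus f g s l1 l2 H H0). Qed.
Lemma dl_minus f g s l1 l2 : derivable_pt_lim f s l1 -> derivable_pt_lim g s l2 ->
  derivable_pt_lim (fun t => f t - g t) s (l1 - l2).
Proof. intros; exact (derivable_pt_lim_minus f g s l1 l2 H H0). Qed.
Lemma dl_const c s : derivable_pt_lim (fun _ => c) s 0.
Proof. exact (derivable_pt_lim_const c s). Qed.
Lemma dl_id s : derivable_pt_lim (fun t => t) s 1.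
Proof. exact (derivable_pt_lim_id s). Qed.
Lemma dl_pow n s : derivable_pt_lim (fun t => t ^ n) s (INR n * s ^ Init.Nat.pred n).
Proof. exact (derivable_pt_lim_pow s n). Qed.

Ltac dauto := eapply dl_eq; [ repeat (first [ apply dl_minus | apply dl_plus | apply dl_mul
   | apply dl_pow | apply dl_id | apply dl_const | eassumption ]) | ].

Definition dmon (j : nat) (t : R * (nat * nat * nat * nat)) (x y z w : R) : R :=
  match t with (c, (a, b, e, d)) =>
  match j with
  | O => c * (INR a * x ^ Init.Nat.pred a) * y ^ b * z ^ e * w ^ d
  | 1%nat => c * x ^ a * (INR b * y ^ Init.Nat.pred b) * z ^ e * w ^ d
  | 2%nat => c * x ^ a * y ^ b * (INR e * z ^ Init.Nat.pred e) * w ^ d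
  | _ => c * x ^ a * y ^ b * z ^ e * (INR d * w ^ Init.Nat.pred d)
  end end.

Definition dpe (j : nat) (p : poly4) (x y z w : R) : R :=
  fold_right (fun t acc => dmon j t x y z w + acc) 0 p.

Lemma pd_peval j p x y z w : pd j (peval p) x y z w (dpe j p x y z w).
Proof.
  induction p as [|[c [[[a b] e] d]] p IH].
  - destruct j as [|[|[|j]]]; simpl; apply dl_const.
  - destruct j as [|[|[|j]]]; simpl in *; unfold peval in *; simpl;
    (dauto; cbv beta; ring).
Qed.

Lemma pow_pred_mul a x : x * (INR a * x ^ Init.Nat.pred a) = INR a * x ^ a.
Proof. destruct a; simpl; ring. Qed.

Lemma euler m p x y z w : homog m p ->
  x * dpe 0 p x y z w + y * dpe 1 p x y z w + z * dpe 2 p x y z w + w * dpe 3 p x y z w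
  = INR m * peval p x y z w.
Proof.
  intros H; induction H as [|[c [[[a b] e] d]] p Ht Hp IH].
  - simpl; ring.
  - unfold dpe, peval in *; simpl.
    transitivity (c * (x * (INR a * x ^ Init.Nat.pred a)) * y ^ b * z ^ e * w ^ d
      + c * x ^ a * (y * (INR b * y ^ Init.Nat.pred b)) * z ^ e * w ^ d
      + c * x ^ a * y ^ b * (z * (INR e * z ^ Init.Nat.pred e)) * w ^ d
      + c * x ^ a * y ^ b * z ^ e * (w * (INR d * w ^ Init.Nat.pred d))
      + (x * fold_right (fun t acc => dmon 0 t x y z w + acc) 0 p +
   y * fold_right (fun t acc => dmon 1 t x y z w + acc) 0 p +
   z * fold_right (fun t acc => dmon 2 t x y z w + acc) 0 p +
   w * fold_right (fun t acc => dmon 3 t x y z w + acc) 0 p)).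
    + ring.
    + rewrite IH, !pow_pred_mul, <- Ht, !plus_INR. ring.
Qed.

Lemma rel_deriv f g s lf lg : (forall t, f t = g t) ->
  derivable_pt_lim f s lf -> derivable_pt_lim g s lg -> lf = lg.
Proof.
  intros E H1 H2. assert (f = g) by (apply functional_extensionality; exact E).
  subst. exact (uniqueness_limite _ _ _ _ H1 H2).
Qed.

Definition cmp (i : nat) (t : R * R * R * R) : R :=
  match t with (a0, a1, a2, a3) =>
    match i with O => a0 | 1%nat => a1 | 2%nat => a2 | _ => a3 end end.

Lemma dqmul i (a0 a1 a2 a3 f0 f1 f2 f3 : R -> R) c0 c1 c2 c3 l0 l1 l2 l3 s :
  derivable_pt_lim a0 s c0 -> derivable_pt_lim a1 s c1 ->
  derivable_pt_lim a2 s c2 -> derivable_pt_lim a3 s c3 ->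
  derivable_pt_lim f0 s l0 -> derivable_pt_lim f1 s l1 ->
  derivable_pt_lim f2 s l2 -> derivable_pt_lim f3 s l3 ->
  derivable_pt_lim (fun t => cmp i (qmul (a0 t, a1 t, a2 t, a3 t) (f0 t, f1 t, f2 t, f3 t))) s
    (cmp i (qmul (c0, c1, c2, c3) (f0 s, f1 s, f2 s, f3 s))
     + cmp i (qmul (a0 s, a1 s, a2 s, a3 s) (l0, l1, l2, l3))).
Proof.
  intros.
  destruct i as [|[|[|i]]]; simpl; (dauto; cbv beta; ring).
Qed.
Definition ej (j : nat) : R*R*R*R :=
  match j with O => (1,0,0,0) | 1%nat => (0,1,0,0) | 2%nat => (0,0,1,0) | _ => (0,0,0,1) end.
Lemma solve_y y a b : y <> 0 -> y*a = b -> a = b/y.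
Proof. intros; subst; field; auto. Qed.
Lemma alg (m:R) x y z w u v p q u0 u1 u2 u3 v0 v1 v2 v3 p0 p1 p2 p3 q0 q1 q2 q3 :
 y<>0 -> y*p = z*v -> y*q = w*v -> y*p0 = z*v0 -> p + y*p1 = z*v1 -> y*p2 = v + z*v2 -> y*p3 = z*v3 ->
 y*q0 = w*v0 -> q + y*q1 = w*v1 -> y*q2 = w*v2 -> y*q3 = v + w*v3 ->
 x*u0+y*u1+z*u2+w*u3 = m*u -> x*v0+y*v1+z*v2+w*v3 = m*v ->
 det4 (fun i j => cmp i (qmul (ej j) (u,v,p,q)) + cmp i (qmul (x,y,z,w)
    (cmp j (u0,u1,u2,u3), cmp j (v0,v1,v2,v3), cmp j (p0,p1,p2,p3), cmp j (q0,q1,q2,q3))))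
 = (m+1) * (cmp 1 (qmul (x,y,z,w) (u,v,p,q)))^2 *
        (y * (x^2 + y^2 + z^2 + w^2) * (v * u0 - u * v0)
         + y^2 * u^2 + v^2 * (y^2 + z^2 + w^2)) / y ^ 4.
Proof.
  intros Hy H1 H2 H3 H4 H5 H6 H7 H8 H9 H10 Eu Ev.
  apply solve_y in H1, H2, H3, H5, H6, H7, H9, H10; auto.
  assert (y*p1 = z*v1 - p) as H4' by lra. apply solve_y in H4'; auto.
  assert (y*q1 = w*v1 - q) as H8' by lra. apply solve_y in H8'; auto.
  assert (y*u1 = m*u - x*u0 - z*u2 - w*u3) as Eu' by lra. apply solve_y in Eu'; auto.
  assert (y*v1 = m*v - x*v0 - z*v2 - w*v3) as Ev' by lra. apply solve_y in Ev'; auto.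
  clear H4 H8 Eu Ev.
  subst p1 q1. subst p q. subst u1 v1. subst.
  unfold det4, det3, cmp, qmul, ej; cbn beta iota.
  field; auto.
Qed.

Theorem corollary3p1 (m : nat) (u v p q : poly4) :
  (1 <= m)%nat ->
  homog m u -> homog m v -> homog m p -> homog m q ->
  (forall x y z w, y * peval p x y z w = z * peval v x y z w) ->
  (forall x y z w, y * peval q x y z w = w * peval v x y z w) ->
  forall x y z w ux vx : R,
    y <> 0 ->
    pd 0 (peval u) x y z w ux ->
    pd 0 (peval v) x y z w vx ->
    jac_det (Phi u v p q) x y z w
      ((INR m + 1) * (Phi u v p q 1%nat x y z w) ^ 2 *
        (y * (x^2 + y^2 + z^2 + w^2) * (peval v x y z w * ux - peval u x y z w * vx)
         + y^2 * (peval u x y z w)^2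
         + (peval v x y z w)^2 * (y^2 + z^2 + w^2)) / y ^ 4).
Proof.
  intros Hm Hu Hv Hp Hq Hyp Hyq x y z w ux vx Hy Hux Hvx.
  assert (ux = dpe 0 u x y z w) as -> by
    exact (uniqueness_limite _ _ _ _ Hux (pd_peval 0 u x y z w)).
  assert (vx = dpe 0 v x y z w) as -> by
    exact (uniqueness_limite _ _ _ _ Hvx (pd_peval 0 v x y z w)).
  clear Hux Hvx.
  pose proof (pd_peval 0 u x y z w) as u0; pose proof (pd_peval 1 u x y z w) as u1;
  pose proof (pd_peval 2 u x y z w) as u2; pose proof (pd_peval 3 u x y z w) as u3;
  pose proof (pd_peval 0 v x y z w) as v0; pose proof (pd_peval 1 v x y z w) as v1;
  pose proof (pd_peval 2 v x y z w) as v2; pose proof (pd_peval 3 v x y z w) as v3;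
  pose proof (pd_peval 0 p x y z w) as p0; pose proof (pd_peval 1 p x y z w) as p1;
  pose proof (pd_peval 2 p x y z w) as p2; pose proof (pd_peval 3 p x y z w) as p3;
  pose proof (pd_peval 0 q x y z w) as q0; pose proof (pd_peval 1 q x y z w) as q1;
  pose proof (pd_peval 2 q x y z w) as q2; pose proof (pd_peval 3 q x y z w) as q3.
  simpl pd in *.
  exists (fun i j => cmp i (qmul (ej j) (peval u x y z w, peval v x y z w, peval p x y z w, peval q x y z w))
    + cmp i (qmul (x,y,z,w)
    (cmp j (dpe 0 u x y z w, dpe 1 u x y z w, dpe 2 u x y z w, dpe 3 u x y z w),
     cmp j (dpe 0 v x y z w, dpe 1 v x y z w, dpe 2 v x y z w, dpe 3 v x y z w),
     cmp j (dpe 0 p x y z w, dpe 1 p x y z w, dpe 2 p x y z w, dpe 3 p x y z w),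
     cmp j (dpe 0 q x y z w, dpe 1 q x y z w, dpe 2 q x y z w, dpe 3 q x y z w)))).
  split.
  - intros i j Hi Hj.
    destruct j as [|[|[|[|j]]]]; [ | | | | lia ]; simpl pd.
    + apply (dqmul i (fun t => t) (fun _ => y) (fun _ => z) (fun _ => w)
        (fun t => peval u t y z w) (fun t => peval v t y z w)
        (fun t => peval p t y z w) (fun t => peval q t y z w));
      first [ apply dl_id | apply dl_const | assumption ].
    + apply (dqmul i (fun _ => x) (fun t => t) (fun _ => z) (fun _ => w)
        (fun t => peval u x t z w) (fun t => peval v x t z w)
        (fun t => peval p x t z w) (fun t => peval q x t z w));
      first [ apply dl_id | apply dl_const | assumption ].
    + apply (dqmul i (fun _ => x) (fun _ => y) (fun t => t) (fun _ => w)
        (fun t => peval u x y t w) (fun t => peval v x y t w)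
        (fun t => peval p x y t w) (fun t => peval q x y t w));
      first [ apply dl_id | apply dl_const | assumption ].
    + apply (dqmul i (fun _ => x) (fun _ => y) (fun _ => z) (fun t => t)
        (fun t => peval u x y z t) (fun t => peval v x y z t)
        (fun t => peval p x y z t) (fun t => peval q x y z t));
      first [ apply dl_id | apply dl_const | assumption ].
  - assert (R0: forall f g s lf lg, (forall t, f t = g t) ->
      derivable_pt_lim f s lf -> derivable_pt_lim g s lg -> lf = lg) by exact rel_deriv.
    assert (Ep0 : y * dpe 0 p x y z w = z * dpe 0 v x y z w).
    { assert (E := R0 (fun t => y * peval p t y z w) (fun t => z * peval v t y z w) x
        (0 * peval p x y z w + y * dpe 0 p x y z w) (0 * peval v x y z w + z * dpe 0 v x y z w)
        (fun t => Hyp t y z w)).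
      assert (0 * peval p x y z w + y * dpe 0 p x y z w = 0 * peval v x y z w + z * dpe 0 v x y z w) by
        (apply E; (eapply dl_eq; [apply dl_mul; first [apply dl_id | apply dl_const | eassumption] | cbv beta; ring])).
      lra. }
    assert (Ep1 : peval p x y z w + y * dpe 1 p x y z w = z * dpe 1 v x y z w).
    { assert (E := R0 (fun t => t * peval p x t z w) (fun t => z * peval v x t z w) y
        (1 * peval p x y z w + y * dpe 1 p x y z w) (0 * peval v x y z w + z * dpe 1 v x y z w)
        (fun t => Hyp x t z w)).
      assert (1 * peval p x y z w + y * dpe 1 p x y z w = 0 * peval v x y z w + z * dpe 1 v x y z w) by
        (apply E; (eapply dl_eq; [apply dl_mul; first [apply dl_id | apply dl_const | eassumption] | cbv beta; ring])).
      lra. }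
    assert (Ep2 : y * dpe 2 p x y z w = peval v x y z w + z * dpe 2 v x y z w).
    { assert (E := R0 (fun t => y * peval p x y t w) (fun t => t * peval v x y t w) z
        (0 * peval p x y z w + y * dpe 2 p x y z w) (1 * peval v x y z w + z * dpe 2 v x y z w)
        (fun t => Hyp x y t w)).
      assert (0 * peval p x y z w + y * dpe 2 p x y z w = 1 * peval v x y z w + z * dpe 2 v x y z w) by
        (apply E; (eapply dl_eq; [apply dl_mul; first [apply dl_id | apply dl_const | eassumption] | cbv beta; ring])).
      lra. }
    assert (Ep3 : y * dpe 3 p x y z w = z * dpe 3 v x y z w).
    { assert (E := R0 (fun t => y * peval p x y z t) (fun t => z * peval v x y z t) w
        (0 * peval p x y z w + y * dpe 3 p x y z w) (0 * peval v x y z w + z * dpe 3 v x y z w)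
        (fun t => Hyp x y z t)).
      assert (0 * peval p x y z w + y * dpe 3 p x y z w = 0 * peval v x y z w + z * dpe 3 v x y z w) by
        (apply E; (eapply dl_eq; [apply dl_mul; first [apply dl_id | apply dl_const | eassumption] | cbv beta; ring])).
      lra. }
    assert (Eq0 : y * dpe 0 q x y z w = w * dpe 0 v x y z w).
    { assert (E := R0 (fun t => y * peval q t y z w) (fun t => w * peval v t y z w) x
        (0 * peval q x y z w + y * dpe 0 q x y z w) (0 * peval v x y z w + w * dpe 0 v x y z w)
        (fun t => Hyq t y z w)).
      assert (0 * peval q x y z w + y * dpe 0 q x y z w = 0 * peval v x y z w + w * dpe 0 v x y z w) by
        (apply E; (eapply dl_eq; [apply dl_mul; first [apply dl_id | apply dl_const | eassumption] | cbv beta; ring])).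
      lra. }
    assert (Eq1 : peval q x y z w + y * dpe 1 q x y z w = w * dpe 1 v x y z w).
    { assert (E := R0 (fun t => t * peval q x t z w) (fun t => w * peval v x t z w) y
        (1 * peval q x y z w + y * dpe 1 q x y z w) (0 * peval v x y z w + w * dpe 1 v x y z w)
        (fun t => Hyq x t z w)).
      assert (1 * peval q x y z w + y * dpe 1 q x y z w = 0 * peval v x y z w + w * dpe 1 v x y z w) by
        (apply E; (eapply dl_eq; [apply dl_mul; first [apply dl_id | apply dl_const | eassumption] | cbv beta; ring])).
      lra. }
    assert (Eq2 : y * dpe 2 q x y z w = w * dpe 2 v x y z w).
    { assert (E := R0 (fun t => y * peval q x y t w) (fun t => w * peval v x y t w) z
        (0 * peval q x y z w + y * dpe 2 q x y z w) (0 * peval v x y z w + w * dpe 2 v x y z w)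
        (fun t => Hyq x y t w)).
      assert (0 * peval q x y z w + y * dpe 2 q x y z w = 0 * peval v x y z w + w * dpe 2 v x y z w) by
        (apply E; (eapply dl_eq; [apply dl_mul; first [apply dl_id | apply dl_const | eassumption] | cbv beta; ring])).
      lra. }
    assert (Eq3 : y * dpe 3 q x y z w = peval v x y z w + w * dpe 3 v x y z w).
    { assert (E := R0 (fun t => y * peval q x y z t) (fun t => t * peval v x y z t) w
        (0 * peval q x y z w + y * dpe 3 q x y z w) (1 * peval v x y z w + w * dpe 3 v x y z w)
        (fun t => Hyq x y z t)).
      assert (0 * peval q x y z w + y * dpe 3 q x y z w = 1 * peval v x y z w + w * dpe 3 v x y z w) by
        (apply E; (eapply dl_eq; [apply dl_mul; first [apply dl_id | apply dl_const | eassumption] | cbv beta; ring])).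
      lra. }
    pose proof (euler m u x y z w Hu) as Eu.
    pose proof (euler m v x y z w Hv) as Ev.
    pose proof (Hyp x y z w) as Hp0. pose proof (Hyq x y z w) as Hq0.
    symmetry.
    exact (alg (INR m) x y z w _ _ _ _ _ _ _ _ _ _ _ _ _ _ _ _ _ _ _ _
      Hy Hp0 Hq0 Ep0 Ep1 Ep2 Ep3 Eq0 Eq1 Eq2 Eq3 Eu Ev).
Qed.
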